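(* Each of the following systems has an isochronous center at the origin $O$ with zero Urabe function (in systems with $\pm,\mp$, upper signs throughout or lower signs throughout): (i) for every $a\in\mathbb R$: $\dot x=-y+xy-\frac{3a}{4}x^2+ax^3-\frac a4x^4$, $\dot y=x+3y^2+\frac{3a}{2}xy-x^2+\frac{9a}{4}x^2y+\left(\frac13+\frac98a^2\right)x^3-\frac{3a}{4}x^3y-\frac{3a^2}{8}x^4$; (ii) $\dot x=-y+xy\pm\frac{\sqrt2}{2}x^2\mp\frac{2\sqrt2}{3}x^3\pm\frac{\sqrt2}{6}x^4$, $\dot y=x+6y^2\mp\sqrt2xy-\frac52x^2\mp\frac{9\sqrt2}{2}x^2y+\frac{13}{3}x^3\pm\frac{3\sqrt2}{2}x^3y-\frac43x^4$; (iii) $\dot x=-y\mp2\sqrt2xy+x^2\pm2\sqrt2x^3$, $\dot y=x\mp6\sqrt2y^2-2xy\pm2\sqrt2x^2\pm8\sqrt2x^2y+\frac{14}{3}x^3\mp2\sqrt2x^4$.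
   Context: For a real planar polynomial system $\dot x=-y+A(x,y)$, $\dot y=x+B(x,y)$, with $A,B$ polynomials having no terms of degree $<2$, the origin $O$ is an isochronous center if there is a punctured neighborhood of $O$ in which every orbit is a closed orbit surrounding $O$ and all these orbits have the same period. Zero Urabe function: write the system as $\dot x=p_0(x)+p_1(x)y$, $\dot y=q_0(x)+q_1(x)y+q_2(x)y^2$ ($p_0(0)=q_0(0)=0$, $p_1(0)\ne0$), where it holds that $-\frac{p_1'p_0}{p_1}+q_1+p_0'-\frac{2q_2p_0}{p_1}\equiv0$. Put $f=-\frac{q_2+p_1'}{p_1}$, $g=-\frac{q_2p_0^2}{p_1}+q_1p_0-p_1q_0$ (the change $z=p_0+p_1y$ gives $\dot x=z$, $\dot z=-g(x)-f(x)z^2$), $F(x)=\int_0^xf$, and $\xi$ near $0$ by $\frac12\xi(x)^2=\int_0^xg(s)e^{2F(s)}ds$, $x\xi(x)>0$ for $x\ne0$. The Urabe function of an isochronous center is the odd analytic $h$ with $\frac{\xi(x)}{1+h(\xi(x))}=g(x)e^{F(x)}$; ''zero Urabe function'' means $h\equiv0$, i.e. $\xi(x)=g(x)e^{F(x)}$ near $0$. *)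

(* Defs.v *)
From Stdlib Require Import Reals Lra List ClassicalEpsilon.
Import ListNotations.
Open Scope R_scope.

(** * Polynomials in one variable as coefficient lists [c0; c1; ...] (increasing degree) *)
Fixpoint peval (p : list R) (x : R) : R :=
  match p with
  | [] => 0
  | c :: l => c + x * peval l x
  end.

Fixpoint pderiv_aux (n : nat) (p : list R) : list R :=
  match p with
  | [] => []
  | c :: l => INR n * c :: pderiv_aux (S n) l
  end.

Definition pderiv (p : list R) : list R :=
  match p with
  | [] => []
  | _ :: l => pderiv_aux 1 l
  end.

(** * Oriented Riemann integral, total version (0 if not integrable) *)
Definition Rint (f : R -> R) (a b : R) : R :=
  match excluded_middle_informative (inhabited (Riemann_integrable f a b)) with
  | left h => RiemannInt (epsilon h (fun _ => True))
  | right _ => 0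
  end.

Definition is_solution (P Q : R -> R -> R) (u v : R -> R) : Prop :=
  forall t, derivable_pt_lim u t (P (u t) (v t)) /\
            derivable_pt_lim v t (Q (u t) (v t)).

(** the orbit {(u t, v t)} surrounds the origin: O lies in a bounded component
    of the complement of the orbit, i.e. every continuous path from O to a point
    far enough away meets the orbit *)
Definition surrounds_origin (u v : R -> R) : Prop :=
  (forall t, (u t, v t) <> (0, 0)) /\
  exists M : R, forall g1 g2 : R -> R,
    continuity g1 -> continuity g2 -> g1 0 = 0 -> g2 0 = 0 ->
    g1 1 ^ 2 + g2 1 ^ 2 > M ^ 2 ->
    exists s t, 0 <= s <= 1 /\ g1 s = u t /\ g2 s = v t.

Definition closed_orbit_period (P Q : R -> R -> R) (x0 y0 T : R) : Prop :=
  exists u v : R -> R,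
    is_solution P Q u v /\ u 0 = x0 /\ v 0 = y0 /\
    0 < T /\ (forall t, u (t + T) = u t /\ v (t + T) = v t) /\
    (forall s, 0 < s < T -> (u s, v s) <> (x0, y0)) /\
    surrounds_origin u v.

Definition isochronous_center (P Q : R -> R -> R) : Prop :=
  exists r T : R, 0 < r /\
    forall x0 y0, 0 < x0 ^ 2 + y0 ^ 2 < r ^ 2 -> closed_orbit_period P Q x0 y0 T.

Definition urabe_f (p0 p1 q0 q1 q2 : list R) (x : R) : R :=
  - (peval q2 x + peval (pderiv p1) x) / peval p1 x.
Definition urabe_g (p0 p1 q0 q1 q2 : list R) (x : R) : R :=
  - peval q2 x * (peval p0 x) ^ 2 / peval p1 x + peval q1 x * peval p0 x
  - peval p1 x * peval q0 x.
Definition urabe_F (p0 p1 q0 q1 q2 : list R) (x : R) : R :=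
  Rint (urabe_f p0 p1 q0 q1 q2) 0 x.
Definition urabe_xi (p0 p1 q0 q1 q2 : list R) (x : R) : R :=
  let I := Rint (fun s => urabe_g p0 p1 q0 q1 q2 s
                          * exp (2 * urabe_F p0 p1 q0 q1 q2 s)) 0 x in
  if Rlt_dec 0 x then sqrt (2 * I) else - sqrt (2 * I).

Definition zero_urabe (P Q : R -> R -> R) : Prop :=
  exists p0 p1 q0 q1 q2 : list R,
    (forall x y, P x y = peval p0 x + peval p1 x * y) /\
    (forall x y, Q x y = peval q0 x + peval q1 x * y + peval q2 x * y ^ 2) /\
    peval p0 0 = 0 /\ peval q0 0 = 0 /\ peval p1 0 <> 0 /\
    (forall x, peval p1 x <> 0 ->
       - peval (pderiv p1) x * peval p0 x / peval p1 x + peval q1 x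
       + peval (pderiv p0) x - 2 * peval q2 x * peval p0 x / peval p1 x = 0) /\
    exists d, 0 < d /\ forall x, Rabs x < d ->
      urabe_xi p0 p1 q0 q1 q2 x
      = urabe_g p0 p1 q0 q1 q2 x * exp (urabe_F p0 p1 q0 q1 q2 x).

Definition isochronous_zero_urabe (P Q : R -> R -> R) : Prop :=
  isochronous_center P Q /\ zero_urabe P Q.

(* Main.v *)
Require Import Defs.
From Stdlib Require Import Reals Lra Lia List ClassicalEpsilon FunctionalExtensionality Ranalysis5.
Import ListNotations.
Open Scope R_scope.

Lemma D_eq f x a b : derivable_pt_lim f x a -> a = b -> derivable_pt_lim f x b.
Proof. intros H ->; exact H. Qed.
Lemma D_const c x : derivable_pt_lim (fun _ => c) x 0.
Proof. apply derivable_pt_lim_const. Qed.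
Lemma D_id x : derivable_pt_lim (fun y => y) x 1.
Proof. apply derivable_pt_lim_id. Qed.
Lemma D_plus f g x a b : derivable_pt_lim f x a -> derivable_pt_lim g x b ->
  derivable_pt_lim (fun y => f y + g y) x (a + b).
Proof. intros; now apply derivable_pt_lim_plus. Qed.
Lemma D_minus f g x a b : derivable_pt_lim f x a -> derivable_pt_lim g x b ->
  derivable_pt_lim (fun y => f y - g y) x (a - b).
Proof. intros; now apply derivable_pt_lim_minus. Qed.
Lemma D_opp f x a : derivable_pt_lim f x a ->
  derivable_pt_lim (fun y => - f y) x (- a).
Proof. intros; now apply derivable_pt_lim_opp. Qed.
Lemma D_mult f g x a b : derivable_pt_lim f x a -> derivable_pt_lim g x b ->
  derivable_pt_lim (fun y => f y * g y) x (a * g x + f x * b).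
Proof. intros; now apply derivable_pt_lim_mult. Qed.
Lemma D_div f g x a b : derivable_pt_lim f x a -> derivable_pt_lim g x b -> g x <> 0 ->
  derivable_pt_lim (fun y => f y / g y) x ((a * g x - b * f x) / (g x)^2).
Proof. intros H H0 H1. pose proof (derivable_pt_lim_div f g x a b H H0 H1) as K. unfold Rsqr in K. replace (g x ^2) with (g x * g x) by ring. exact K. Qed.
Lemma D_comp f g x a b : derivable_pt_lim f x a -> derivable_pt_lim g (f x) b ->
  derivable_pt_lim (fun y => g (f y)) x (b * a).
Proof. intros H1 H2. exact (derivable_pt_lim_comp f g x a b H1 H2). Qed.
Lemma D_pow f x a n : derivable_pt_lim f x a ->
  derivable_pt_lim (fun y => f y ^ n) x (INR n * f x ^ (pred n) * a).
Proof. intros H. apply (D_comp f (fun y => y ^ n)); auto. apply derivable_pt_lim_pow. Qed.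

Lemma pderiv_aux_shift : forall l m k x,
  peval (pderiv_aux (m + k) l) x = INR m * peval l x + peval (pderiv_aux k l) x.
Proof.
  induction l as [|c l IH]; intros m k x; simpl. ring.
  replace (S (m + k)) with (m + S k)%nat by lia.
  rewrite IH, plus_INR. ring.
Qed.

Lemma pderiv_cons c l x : peval (pderiv (c :: l)) x = peval l x + x * peval (pderiv l) x.
Proof.
  destruct l as [|d l]; simpl. ring.
  change 2%nat with (1 + 1)%nat. rewrite pderiv_aux_shift. simpl. ring.
Qed.

Lemma peval_deriv : forall p x, derivable_pt_lim (peval p) x (peval (pderiv p) x).
Proof.
  induction p as [|c l IH]; intro x.
  - simpl. apply derivable_pt_lim_const.
  - rewrite pderiv_cons. simpl.
    eapply D_eq. apply D_plus. apply D_const. apply D_mult. apply D_id. apply IH.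
    cbv beta; ring.
Qed.

Lemma peval_cont p x : continuity_pt (peval p) x.
Proof. apply derivable_continuous_pt. exists (peval (pderiv p) x). apply peval_deriv. Qed.

Lemma Rint_val h a b (pr : Riemann_integrable h a b) : Rint h a b = RiemannInt pr.
Proof.
  unfold Rint. destruct excluded_middle_informative as [i|n].
  - apply RiemannInt_P5.
  - exfalso; apply n; exact (inhabits pr).
Qed.

Lemma Rint_refl h a : Rint h a a = 0.
Proof.
  unfold Rint. destruct excluded_middle_informative as [i|n]. apply RiemannInt_P9. reflexivity.
Qed.

Lemma cont_integrable h a b lo hi : lo <= a <= hi -> lo <= b <= hi ->
  (forall y, lo <= y <= hi -> continuity_pt h y) -> Riemann_integrable h a b.
Proof.
  intros Ha Hb Hc. destruct (Rle_dec a b).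
  - apply continuity_implies_RiemannInt; auto. intros; apply Hc; lra.
  - apply RiemannInt_P1, continuity_implies_RiemannInt; [lra|]. intros; apply Hc; lra.
Qed.

Lemma Rint_chasles h a b c lo hi : lo <= a <= hi -> lo <= b <= hi -> lo <= c <= hi ->
  (forall y, lo <= y <= hi -> continuity_pt h y) ->
  Rint h a b + Rint h b c = Rint h a c.
Proof.
  intros Ha Hb Hc HC.
  rewrite (Rint_val h a b (cont_integrable h a b lo hi Ha Hb HC)).
  rewrite (Rint_val h b c (cont_integrable h b c lo hi Hb Hc HC)).
  rewrite (Rint_val h a c (cont_integrable h a c lo hi Ha Hc HC)).
  apply RiemannInt_P26.
Qed.

Lemma Rint_deriv h lo hi c x : lo < c < hi -> lo < x < hi ->
  (forall y, lo <= y <= hi -> continuity_pt h y) ->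
  derivable_pt_lim (fun y => Rint h c y) x (h x).
Proof.
  intros Hc Hx HC.
  assert (Hle : lo <= hi) by lra.
  pose (Pr := primitive Hle (FTC_P1 Hle HC)).
  apply derivable_pt_lim_locally_ext with (f := fun y => Pr y - Pr c) (a := lo) (b := hi); auto.
  - intros z Hz. unfold Pr, primitive.
    destruct (Rle_dec lo z); [|lra]. destruct (Rle_dec z hi); [|lra].
    destruct (Rle_dec lo c); [|lra]. destruct (Rle_dec c hi); [|lra].
    rewrite <- (Rint_val h lo z), <- (Rint_val h lo c).
    rewrite <- (Rint_chasles h lo c z lo hi); try lra; auto.
  - eapply D_eq. apply D_minus. apply RiemannInt_P28; lra. apply D_const. ring.
Qed.

Lemma zero_deriv_const H lo hi : (forall x, lo < x < hi -> derivable_pt_lim H x 0) ->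
  forall a b, lo < a < hi -> lo < b < hi -> H a = H b.
Proof.
  intros HD a b Ha Hb.
  destruct (Rtotal_order a b) as [Hab|[Hab|Hab]]; [| now subst |].
  - destruct (MVT_cor2 H (fun _ => 0) a b Hab) as [c [Hc _]].
    intros; apply HD; lra. lra.
  - destruct (MVT_cor2 H (fun _ => 0) b a Hab) as [c [Hc _]].
    intros; apply HD; lra. lra.
Qed.

Lemma Rint_FTC h H lo hi c x : lo < c < hi -> lo < x < hi ->
  (forall y, lo <= y <= hi -> continuity_pt h y) ->
  (forall y, lo < y < hi -> derivable_pt_lim H y (h y)) ->
  Rint h c x = H x - H c.
Proof.
  intros Hc Hx HC HD.
  assert (E := zero_deriv_const (fun y => Rint h c y - H y) lo hi).
  assert (E1 : forall y, lo < y < hi -> derivable_pt_lim (fun y => Rint h c y - H y) y 0).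
  { intros y Hy. eapply D_eq. apply D_minus. apply (Rint_deriv h lo hi); auto. apply HD; auto. ring. }
  specialize (E E1 x c Hx Hc). simpl in E. rewrite Rint_refl in E. lra.
Qed.


Lemma D_cont f x l : derivable_pt_lim f x l -> continuity_pt f x.
Proof. intro H. apply derivable_continuous_pt. exists l. exact H. Qed.

Lemma cont_eps f x : continuity_pt f x -> forall eps, 0 < eps ->
  exists del, 0 < del /\ forall y, Rabs (y - x) < del -> Rabs (f y - f x) < eps.
Proof.
  intros H eps He. destruct (H eps He) as [del [Hd Hy]]. exists del. split; auto.
  intros y Hy'. destruct (Req_dec y x) as [->|Hne].
  - unfold Rminus; rewrite Rplus_opp_r, Rabs_R0; auto.
  - apply Hy. split. split. exact I. auto. exact Hy'.
Qed.

Lemma angle p q : p ^ 2 + q ^ 2 = 1 -> exists t, cos t = p /\ sin t = q.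
Proof.
  intro H. assert (Hp : -1 <= p <= 1) by nra.
  assert (Hs : sqrt (1 - p²) = Rabs q).
  { rewrite <- sqrt_Rsqr_abs. f_equal. unfold Rsqr; nra. }
  destruct (Rle_dec 0 q).
  - exists (acos p). rewrite cos_acos, sin_acos; auto. rewrite Hs, Rabs_right; auto; lra.
  - exists (- acos p). rewrite cos_neg, sin_neg, cos_acos, sin_acos; auto.
    rewrite Hs, Rabs_left; lra.
Qed.

Lemma rot A B a b : A ^ 2 + B ^ 2 = a ^ 2 + b ^ 2 -> 0 < A ^ 2 + B ^ 2 ->
  exists t, A * cos t + B * sin t = a /\ - A * sin t + B * cos t = b.
Proof.
  intros Heq Hpos. set (r := sqrt (A ^ 2 + B ^ 2)).
  assert (Hr : 0 < r) by (apply sqrt_lt_R0; auto).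
  assert (Hr2 : r * r = A ^ 2 + B ^ 2) by (apply sqrt_sqrt; lra).
  destruct (angle (A / r) (B / r)) as [al [Ha1 Ha2]].
  { replace ((A / r) ^ 2 + (B / r) ^ 2) with ((A ^ 2 + B ^ 2) / (r * r)) by (field; lra). rewrite <- Hr2. field. lra. }
  destruct (angle (a / r) (- b / r)) as [th [Ht1 Ht2]].
  { replace ((a / r) ^ 2 + (- b / r) ^ 2) with ((a ^ 2 + b ^ 2) / (r * r)) by (field; lra). rewrite <- Heq, <- Hr2. field. lra. }
  assert (EA : A = r * cos al) by (rewrite Ha1; field; lra).
  assert (EB : B = r * sin al) by (rewrite Ha2; field; lra).
  assert (Ea : a = r * cos th) by (rewrite Ht1; field; lra).
  assert (Eb : b = - r * sin th) by (rewrite Ht2; field; lra).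
  assert (S1 := sin2_cos2 al). unfold Rsqr in S1.
  exists (th + al). rewrite cos_plus, sin_plus, EA, EB, Ea, Eb. split.
  - transitivity (r * cos th * (sin al * sin al + cos al * cos al)); [ring|]. rewrite S1; ring.
  - transitivity (- r * sin th * (sin al * sin al + cos al * cos al)); [ring|]. rewrite S1; ring.
Qed.

Lemma abs_le a b : Rabs a <= b -> -b <= a <= b.
Proof. unfold Rabs; destruct Rcase_abs; intros; lra. Qed.
Lemma abs_lt a b : Rabs a < b -> -b < a < b.
Proof. unfold Rabs; destruct Rcase_abs; intros; lra. Qed.
Lemma le_abs a b : -b <= a <= b -> Rabs a <= b.
Proof. unfold Rabs; destruct Rcase_abs; intros; lra. Qed.
Lemma lt_abs a b : -b < a < b -> Rabs a < b.
Proof. unfold Rabs; destruct Rcase_abs; intros; lra. Qed.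

Lemma C_plus f g x : continuity_pt f x -> continuity_pt g x -> continuity_pt (fun y => f y + g y) x.
Proof. intros; now apply continuity_pt_plus. Qed.
Lemma C_minus f g x : continuity_pt f x -> continuity_pt g x -> continuity_pt (fun y => f y - g y) x.
Proof. intros; now apply continuity_pt_minus. Qed.
Lemma C_mult f g x : continuity_pt f x -> continuity_pt g x -> continuity_pt (fun y => f y * g y) x.
Proof. intros; now apply continuity_pt_mult. Qed.
Lemma C_comp f g x : continuity_pt f x -> continuity_pt g (f x) -> continuity_pt (fun y => g (f y)) x.
Proof. intros H1 H2. exact (continuity_pt_comp f g x H1 H2). Qed.

Definition clamp lo hi x := Rmax lo (Rmin hi x).

Lemma clamp_lip lo hi a b : lo <= hi -> Rabs (clamp lo hi a - clamp lo hi b) <= Rabs (a - b).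
Proof.
  intro H. unfold clamp, Rmax, Rmin.
  repeat (destruct Rle_dec); apply le_abs; unfold Rabs; destruct Rcase_abs; lra.
Qed.

Lemma lip_cont h x : (forall a b, Rabs (h a - h b) <= Rabs (a - b)) -> continuity_pt h x.
Proof.
  intros L. unfold continuity_pt, continue_in, limit1_in, limit_in.
  intros eps He. exists eps. split; auto. intros y [_ Hy]. simpl in *. unfold Rdist in *.
  eapply Rle_lt_trans. apply L. exact Hy.
Qed.

Lemma clamp_cont lo hi x : lo <= hi -> continuity_pt (clamp lo hi) x.
Proof. intro H. apply lip_cont. intros; now apply clamp_lip. Qed.

Lemma clamp_range lo hi x : lo <= hi -> lo <= clamp lo hi x <= hi.
Proof. intro H. unfold clamp, Rmax, Rmin. repeat (destruct Rle_dec); lra. Qed.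
Lemma clamp_id lo hi x : lo <= x <= hi -> clamp lo hi x = x.
Proof. intro H. unfold clamp, Rmax, Rmin. repeat (destruct Rle_dec); lra. Qed.
Lemma clamp_out lo hi x : 0 < hi -> lo = - hi -> hi < Rabs x -> Rabs (clamp lo hi x) = hi.
Proof.
  intros H1 H2 H3. subst. unfold clamp, Rmax, Rmin in *.
  revert H3. unfold Rabs. repeat (destruct Rcase_abs); repeat (destruct Rle_dec); intros; lra.
Qed.

Ltac dchain := repeat first [ apply derivable_pt_lim_cos | apply derivable_pt_lim_sin | apply D_plus | apply D_minus | apply D_opp | apply D_div
  | apply D_mult | apply D_pow | apply peval_deriv | apply D_id | apply D_const ].

Section Gen.
Variables p0 p1 q0 q1 q2 : list R.
Local Notation P0 := (peval p0).
Local Notation P1 := (peval p1).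
Local Notation Q0 := (peval q0).
Local Notation Q1 := (peval q1).
Local Notation Q2 := (peval q2).
Local Notation D0 := (peval (pderiv p0)).
Local Notation D1 := (peval (pderiv p1)).
Local Notation Dq0 := (peval (pderiv q0)).
Local Notation Dq1 := (peval (pderiv q1)).
Local Notation Dq2 := (peval (pderiv q2)).

Hypothesis H00 : P0 0 = 0.
Hypothesis Hq00 : Q0 0 = 0.
Hypothesis H10 : P1 0 <> 0.
Hypothesis HC : forall x, P1 x <> 0 ->
  - D1 x * P0 x / P1 x + Q1 x + D0 x - 2 * Q2 x * P0 x / P1 x = 0.
Hypothesis HK : forall x,
  (- Dq2 x * P0 x ^ 2 - 2 * Q2 x * P0 x * D0 x + Dq1 x * P0 x * P1 x + Q1 x * D0 x * P1 x
   + Q1 x * P0 x * D1 x - 2 * P1 x * D1 x * Q0 x - P1 x ^ 2 * Dq0 x) * P1 x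
  - (Q2 x + 2 * D1 x) * (- Q2 x * P0 x ^ 2 + Q1 x * P0 x * P1 x - P1 x ^ 2 * Q0 x)
  = P1 x ^ 2.

Variable d0 : R.
Hypothesis Hd0 : 0 < d0.
Hypothesis Hd0b : forall x, Rabs x < d0 -> Rabs (P1 x - P1 0) < Rabs (P1 0) / 2.

Let d := d0 / 2.

Lemma P1_big x : Rabs x < d0 -> Rabs (P1 0) / 2 < Rabs (P1 x).
Proof.
  intro H. specialize (Hd0b x H). assert (Hp := Rabs_pos_lt _ H10).
  assert (T := Rabs_triang_inv (P1 0) (P1 x)). rewrite <- Rabs_Ropp in Hd0b.
  replace (- (P1 x - P1 0)) with (P1 0 - P1 x) in Hd0b by ring. lra.
Qed.

Lemma P1_nz x : Rabs x < d0 -> P1 x <> 0.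
Proof.
  intros H E. assert (T := P1_big x H). rewrite E, Rabs_R0 in T.
  assert (Hp := Rabs_pos_lt _ H10). lra.
Qed.

Lemma P1_small x : Rabs x < d0 -> Rabs (P1 x) < 2 * Rabs (P1 0).
Proof.
  intro H. specialize (Hd0b x H). assert (Hp := Rabs_pos_lt _ H10).
  assert (T := Rabs_triang (P1 x - P1 0) (P1 0)).
  replace (P1 x - P1 0 + P1 0) with (P1 x) in T by ring. lra.
Qed.

Let ff := urabe_f p0 p1 q0 q1 q2.
Let gg := urabe_g p0 p1 q0 q1 q2.
Let FF := urabe_F p0 p1 q0 q1 q2.
Let EE x := exp (FF x).
Let xi x := gg x * EE x.
Let nu x y := (P0 x + P1 x * y) * EE x.

Lemma ff_deriv_ex x : Rabs x < d0 -> exists l, derivable_pt_lim ff x l.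
Proof.
  intro H. eexists. unfold ff, urabe_f. dchain. now apply P1_nz.
Qed.

Lemma ff_cont x : Rabs x < d0 -> continuity_pt ff x.
Proof. intro H. destruct (ff_deriv_ex x H) as [l Hl]. exact (D_cont _ _ _ Hl). Qed.

Lemma in_d x : -d <= x <= d -> Rabs x < d0.
Proof. intro H. unfold d in H. apply Rabs_def1; lra. Qed.

Lemma FF_deriv x : Rabs x < d -> derivable_pt_lim FF x (ff x).
Proof.
  intro H. unfold FF, urabe_F.
  apply (Rint_deriv ff (-d) d 0 x).
  - unfold d; lra.
  - apply Rabs_def2 in H. lra.
  - intros y Hy. apply ff_cont, in_d, Hy.
Qed.

Lemma FF0 : FF 0 = 0.
Proof. unfold FF, urabe_F. apply Rint_refl. Qed.

Lemma EE_deriv x : Rabs x < d -> derivable_pt_lim EE x (EE x * ff x).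
Proof.
  intro H. unfold EE. apply (D_comp FF exp x (ff x) (exp (FF x))).
  apply FF_deriv; auto. apply derivable_pt_lim_exp.
Qed.

Lemma EE_pos x : 0 < EE x.
Proof. apply exp_pos. Qed.

Lemma d_lt x : Rabs x < d -> Rabs x < d0.
Proof. unfold d; lra. Qed.

Lemma xi_deriv x : Rabs x < d -> derivable_pt_lim xi x (EE x).
Proof.
  intro H. assert (Hn : P1 x <> 0) by (apply P1_nz, d_lt, H).
  unfold xi. eapply D_eq. apply D_mult. unfold gg, urabe_g. dchain. exact Hn.
  apply EE_deriv; auto.
  cbv beta. simpl INR. simpl pred.
  transitivity (EE x * ((
   (- Dq2 x * P0 x ^ 2 - 2 * Q2 x * P0 x * D0 x + Dq1 x * P0 x * P1 x + Q1 x * D0 x * P1 x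
   + Q1 x * P0 x * D1 x - 2 * P1 x * D1 x * Q0 x - P1 x ^ 2 * Dq0 x) * P1 x
  - (Q2 x + 2 * D1 x) * (- Q2 x * P0 x ^ 2 + Q1 x * P0 x * P1 x - P1 x ^ 2 * Q0 x)) / P1 x ^ 2)).
  - unfold gg, ff, urabe_f, urabe_g. field. exact Hn.
  - rewrite HK. field. exact Hn.
Qed.

Lemma xi0 : xi 0 = 0.
Proof. unfold xi, gg, urabe_g. rewrite H00, Hq00. unfold Rdiv. ring. Qed.

Lemma d_pos : 0 < d.
Proof. unfold d; lra. Qed.

Lemma xi_incr a b : -d < a -> a < b -> b < d -> xi a < xi b.
Proof.
  intros Ha Hab Hb.
  destruct (MVT_cor2 xi EE a b Hab) as [c [Hc Hc2]].
  - intros c Hc. apply xi_deriv. apply Rabs_def1; lra.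
  - assert (Hp := EE_pos c). nra.
Qed.

Lemma xi_cont x : Rabs x < d -> continuity_pt xi x.
Proof. intro H. exact (D_cont _ _ _ (xi_deriv x H)). Qed.

Lemma xi_pos x : 0 < x < d -> 0 < xi x.
Proof. intro H. rewrite <- xi0. apply xi_incr; lra. Qed.
Lemma xi_neg x : -d < x < 0 -> xi x < 0.
Proof. intro H. rewrite <- xi0. apply xi_incr; lra. Qed.

Lemma gg_cont y : Rabs y < d0 -> continuity_pt gg y.
Proof.
  intro Hy'. assert (Hn := P1_nz y Hy').
  assert (E : exists l, derivable_pt_lim gg y l).
  { eexists. unfold gg, urabe_g. dchain. auto. }
  destruct E as [l' Hl']. exact (D_cont _ _ _ Hl').
Qed.

Lemma urabe_ok x : Rabs x < d -> urabe_xi p0 p1 q0 q1 q2 x = gg x * exp (FF x).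
Proof.
  intro Hx0. assert (Hx := Hx0). apply Rabs_def2 in Hx.
  set (d' := (Rabs x + d) / 2).
  assert (Hd' : Rabs x < d' < d) by (unfold d'; lra).
  assert (Ha := Rabs_pos x).
  assert (HI : Rint (fun s => urabe_g p0 p1 q0 q1 q2 s * exp (2 * urabe_F p0 p1 q0 q1 q2 s)) 0 x
               = xi x * xi x / 2).
  { rewrite (Rint_FTC _ (fun y => xi y * xi y / 2) (-d') d' 0 x).
    - rewrite xi0. field.
    - lra.
    - assert (K : Rabs x < d') by lra. apply Rabs_def2 in K. lra.
    - intros y Hy. assert (Hy2 : Rabs y < d) by (apply Rabs_def1; lra).
      apply continuity_pt_mult.
      + apply gg_cont, d_lt, Hy2.
      + apply (continuity_pt_comp (fun s => 2 * urabe_F p0 p1 q0 q1 q2 s) exp).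
        * apply continuity_pt_mult. apply continuity_pt_const. intros u v; auto.
          exact (D_cont _ _ _ (FF_deriv y Hy2)).
        * apply derivable_continuous_pt, derivable_pt_exp.
    - intros y Hy. eapply D_eq. apply D_div. apply D_mult; apply xi_deriv; apply Rabs_def1; lra.
      apply D_const. lra.
      unfold xi, gg, EE. cbv beta. replace (2 * FF y) with (FF y + FF y) by ring.
      change (urabe_F p0 p1 q0 q1 q2 y) with (FF y). replace (2 * FF y) with (FF y + FF y) by ring. rewrite exp_plus. field. }
  unfold urabe_xi. rewrite HI.
  replace (2 * (xi x * xi x / 2)) with (Rsqr (xi x)) by (unfold Rsqr; field).
  rewrite sqrt_Rsqr_abs. fold (EE x). fold (xi x).
  destruct (Rlt_dec 0 x) as [Hp|Hp].
  - apply Rabs_right. left. apply xi_pos. lra.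
  - destruct (Req_dec x 0) as [->|Hne].
    + rewrite xi0, Rabs_R0. ring.
    + rewrite Rabs_left. ring. apply xi_neg. lra.
Qed.

Lemma exp_mono_le a b : a <= b -> exp a <= exp b.
Proof. intro H. destruct H. left; now apply exp_increasing. right; now subst. Qed.

Lemma e_exists : exists e, 0 < e < d /\ (forall x, Rabs x <= e -> Rabs (P0 x) <= 1) /\
  (forall x, Rabs x <= e -> Rabs (urabe_F p0 p1 q0 q1 q2 x) <= 1).
Proof.
  destruct (cont_eps P0 0 (peval_cont p0 0) 1 Rlt_0_1) as [da [Hda Ka]].
  assert (Hd := d_pos).
  assert (CF : continuity_pt FF 0).
  { apply (D_cont _ _ _ (FF_deriv 0 ltac:(rewrite Rabs_R0; lra))). }
  destruct (cont_eps FF 0 CF 1 Rlt_0_1) as [db [Hdb Kb]].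
  exists (Rmin (d / 2) (Rmin (da / 2) (db / 2))).
  assert (M1 := Rmin_l (d / 2) (Rmin (da / 2) (db / 2))).
  assert (M2 := Rmin_r (d / 2) (Rmin (da / 2) (db / 2))).
  assert (M3 := Rmin_l (da / 2) (db / 2)). assert (M4 := Rmin_r (da / 2) (db / 2)).
  assert (0 < Rmin (d / 2) (Rmin (da / 2) (db / 2))).
  { apply Rmin_glb_lt. lra. apply Rmin_glb_lt; lra. }
  split; [lra|split].
  - intros x Hx. assert (T := Ka x ltac:(rewrite Rminus_0_r; lra)).
    rewrite H00, Rminus_0_r in T. lra.
  - intros x Hx. assert (T := Kb x ltac:(rewrite Rminus_0_r; lra)).
    rewrite FF0, Rminus_0_r in T. fold FF. lra.
Qed.

Variable e : R.
Hypothesis He : 0 < e < d.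
Hypothesis HeP0 : forall x, Rabs x <= e -> Rabs (P0 x) <= 1.
Hypothesis HeF : forall x, Rabs x <= e -> Rabs (urabe_F p0 p1 q0 q1 q2 x) <= 1.

Let Y := 4 / Rabs (P1 0).
Let m := Rmin (Rmin (xi e ^ 2) (xi (-e) ^ 2)) (exp (-1) ^ 2).

Lemma e_d x : Rabs x <= e -> Rabs x < d.
Proof. lra. Qed.

Lemma xie_pos : 0 < xi e.
Proof. apply xi_pos; lra. Qed.
Lemma xime_neg : xi (-e) < 0.
Proof. apply xi_neg; lra. Qed.

Lemma m_pos : 0 < m.
Proof.
  assert (A1 := xie_pos). assert (A2 := xime_neg). assert (A3 := exp_pos (-1)).
  unfold m. apply Rmin_glb_lt. apply Rmin_glb_lt; nra. nra.
Qed.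

Lemma EE_low x : Rabs x <= e -> exp (-1) <= EE x.
Proof. intro H. apply exp_mono_le. specialize (HeF x H). apply abs_le in HeF. fold FF in HeF. lra. Qed.
Lemma EE_up x : Rabs x <= e -> EE x <= exp 1.
Proof. intro H. apply exp_mono_le. specialize (HeF x H). apply abs_le in HeF. fold FF in HeF. lra. Qed.

Lemma nu_big x y : Rabs x <= e -> Y <= Rabs y -> exp (-1) ^ 2 <= nu x y ^ 2.
Proof.
  intros Hx Hy.
  assert (Hx0 : Rabs x < d0) by (apply d_lt, e_d, Hx).
  assert (B1 := P1_big x Hx0). assert (Hp := Rabs_pos_lt _ H10).
  assert (B2 := HeP0 x Hx).
  assert (HY : Rabs (P1 0) / 2 * Y = 2) by (unfold Y; field; lra).
  assert (Hyp : 0 <= Rabs y) by apply Rabs_pos.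
  assert (K : 1 <= Rabs (P0 x + P1 x * y)).
  { assert (T := Rabs_triang_inv (P1 x * y) (- P0 x)).
    rewrite Rabs_Ropp, Rabs_mult in T. replace (P1 x * y - - P0 x) with (P0 x + P1 x * y) in T by ring.
    assert (Rabs (P1 0) / 2 * Y <= Rabs (P1 x) * Rabs y).
    { assert (0 < Y) by (unfold Y; apply Rdiv_lt_0_compat; lra).
      apply Rmult_le_compat; lra. }
    lra. }
  assert (K2 := EE_low x Hx). assert (K3 := exp_pos (-1)).
  unfold nu. rewrite Rpow_mult_distr.
  assert (1 <= (P0 x + P1 x * y) ^ 2).
  { rewrite <- (pow2_abs (P0 x + P1 x * y)). nra. }
  assert (exp (-1) ^ 2 <= EE x ^ 2) by nra. nra.
Qed.

Definition Xinv c := epsilon (inhabits 0) (fun z => -e <= z <= e /\ xi z = c).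

Lemma xi_cont_e x : -e <= x <= e -> continuity_pt xi x.
Proof. intro H. apply xi_cont. apply lt_abs. lra. Qed.

Lemma xi_incr_e a b : -e <= a -> a < b -> b <= e -> xi a < xi b.
Proof. intros. apply xi_incr; lra. Qed.

Lemma X_spec c : xi (-e) <= c <= xi e -> -e <= Xinv c <= e /\ xi (Xinv c) = c.
Proof.
  intro H. unfold Xinv. apply epsilon_spec.
  destruct (f_interv_is_interv xi (-e) e c) as [z Hz]; try lra; auto.
  apply xi_cont_e. exists z; auto.
Qed.

Lemma xi_inj a b : -e <= a <= e -> -e <= b <= e -> xi a = xi b -> a = b.
Proof.
  intros Ha Hb E. destruct (Rtotal_order a b) as [L|[L|L]]; auto.
  - assert (T := xi_incr_e a b). lra.
  - assert (T := xi_incr_e b a). lra.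
Qed.

Lemma xi_le_e a b : -e <= a -> a <= b -> b <= e -> xi a <= xi b.
Proof. intros H1 H2 H3. destruct H2 as [H2|H2]. left; apply xi_incr_e; lra. subst; lra. Qed.

Lemma X_xi z : -e <= z <= e -> Xinv (xi z) = z.
Proof.
  intro H. assert (Hc : xi (-e) <= xi z <= xi e).
  { split; apply xi_le_e; lra. }
  destruct (X_spec _ Hc) as [H1 H2]. apply xi_inj; auto.
Qed.

Lemma X_deriv c : xi (-e) < c < xi e -> derivable_pt_lim Xinv c (1 / EE (Xinv c)).
Proof.
  intro Hc.
  assert (Xlo : Xinv (xi (-e)) = -e) by (apply X_xi; lra).
  assert (Xhi : Xinv (xi e) = e) by (apply X_xi; lra).
  assert (Prf : forall a, Xinv (xi (-e)) <= a <= Xinv (xi e) -> derivable_pt xi a).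
  { intros a Ha. rewrite Xlo, Xhi in Ha. exists (EE a). apply xi_deriv. apply lt_abs; lra. }
  assert (Prg : continuity_pt Xinv c).
  { apply (continuity_pt_recip_interv xi Xinv (-e) e); try lra.
    - intros; apply xi_incr_e; lra.
    - intros x Hx1 Hx2. unfold comp, id. apply (proj2 (X_spec x (conj Hx1 Hx2))).
    - intros x Hx1 Hx2. apply (proj1 (X_spec x (conj Hx1 Hx2))).
    - exact xi_cont_e. }
  destruct (X_spec c) as [Hc1 Hc2]; [lra|].
  assert (Hincr : Xinv (xi (-e)) <= Xinv c <= Xinv (xi e)) by (rewrite Xlo, Xhi; lra).
  assert (Hder := derivable_pt_lim_recip_interv xi Xinv (xi (-e)) (xi e) c Prf Prg).
  assert (Hd : derive_pt xi (Xinv c) (Prf (Xinv c) Hincr) = EE (Xinv c)).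
  { apply derive_pt_eq_0. apply xi_deriv. apply lt_abs; lra. }
  rewrite <- Hd. apply Hder; try lra.
  - intros x Hx. unfold comp, id. apply (proj2 (X_spec x Hx)).
  - rewrite Hd. assert (T := EE_pos (Xinv c)). lra.
Qed.

Section Orbit.
Variables A B : R.
Hypothesis HAB : 0 < A ^ 2 + B ^ 2 < m.

Definition cc t := A * cos t + B * sin t.
Definition WW t := - A * sin t + B * cos t.
Definition uu t := Xinv (cc t).
Definition vv t := (WW t / EE (uu t) - P0 (uu t)) / P1 (uu t).

Lemma ccWW t : cc t ^ 2 + WW t ^ 2 = A ^ 2 + B ^ 2.
Proof.
  unfold cc, WW. assert (S := sin2_cos2 t). unfold Rsqr in S.
  transitivity ((A ^ 2 + B ^ 2) * (sin t * sin t + cos t * cos t)); [ring|]. rewrite S; ring.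
Qed.

Lemma cc_range t : xi (-e) < cc t < xi e.
Proof.
  assert (T := ccWW t). assert (T1 := xie_pos). assert (T2 := xime_neg).
  assert (M1 : m <= xi e ^ 2) by (unfold m; eapply Rle_trans; [apply Rmin_l|apply Rmin_l]).
  assert (M2 : m <= xi (-e) ^ 2) by (unfold m; eapply Rle_trans; [apply Rmin_l|apply Rmin_r]).
  assert (0 <= WW t ^ 2) by (apply pow2_ge_0).
  split; nra.
Qed.

Lemma uu_spec t : -e <= uu t <= e /\ xi (uu t) = cc t.
Proof. apply X_spec. assert (T := cc_range t). lra. Qed.

Lemma uu_d0 t : Rabs (uu t) < d0.
Proof. destruct (uu_spec t) as [H _]. apply d_lt, e_d, le_abs; lra. Qed.
Lemma uu_d t : Rabs (uu t) < d.
Proof. destruct (uu_spec t) as [H _]. apply e_d, le_abs; lra. Qed.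

Lemma uu_deriv t : derivable_pt_lim uu t (WW t / EE (uu t)).
Proof.
  unfold uu. eapply D_eq. apply (D_comp cc Xinv).
  - unfold cc. eapply D_eq. dchain. reflexivity.
  - apply X_deriv, cc_range.
  - unfold WW. cbv beta. field. apply Rgt_not_eq, EE_pos.
Qed.

Lemma comp_deriv h l t : (forall x, Rabs x < d -> derivable_pt_lim h x (l x)) ->
  derivable_pt_lim (fun t => h (uu t)) t (l (uu t) * (WW t / EE (uu t))).
Proof. intro H. apply (D_comp uu h). apply uu_deriv. apply H, uu_d. Qed.

Lemma vv_deriv t : derivable_pt_lim vv t
  (peval q0 (uu t) + peval q1 (uu t) * vv t + peval q2 (uu t) * vv t ^ 2).
Proof.
  assert (Hn := P1_nz _ (uu_d0 t)). assert (HE := EE_pos (uu t)).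
  destruct (uu_spec t) as [_ Hxi].
  unfold vv. eapply D_eq. apply D_div. apply D_minus. apply D_div.
  - unfold WW. dchain.
  - apply (comp_deriv EE (fun x => EE x * ff x)). apply EE_deriv.
  - apply Rgt_not_eq, HE.
  - apply (comp_deriv P0 D0). intros; apply peval_deriv.
  - apply (comp_deriv P1 D1). intros; apply peval_deriv.
  - exact Hn.
  - cbv beta. unfold xi in Hxi.
    replace (- 0 * sin t + - A * cos t + (0 * cos t + B * - sin t)) with (- cc t) by (unfold cc; ring).
    rewrite <- Hxi. unfold gg, ff, urabe_g, urabe_f.
    assert (Q1e : Q1 (uu t) = D1 (uu t) * P0 (uu t) / P1 (uu t) - D0 (uu t)
                              + 2 * Q2 (uu t) * P0 (uu t) / P1 (uu t)).
    { assert (K := HC (uu t) Hn). lra. }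
    rewrite Q1e. field. split; lra.
Qed.


Lemma sol : is_solution (fun x y => P0 x + P1 x * y)
  (fun x y => Q0 x + Q1 x * y + Q2 x * y ^ 2) uu vv.
Proof.
  intro t. split.
  - eapply D_eq. apply uu_deriv. unfold vv. field.
    split; first [apply (P1_nz _ (uu_d0 t)) | apply Rgt_not_eq, EE_pos].
  - apply vv_deriv.
Qed.

Lemma period t : uu (t + 2 * PI) = uu t /\ vv (t + 2 * PI) = vv t.
Proof.
  assert (E1 : cc (t + 2 * PI) = cc t).
  { unfold cc. rewrite cos_plus, sin_plus, cos_2PI, sin_2PI. ring. }
  assert (E2 : WW (t + 2 * PI) = WW t).
  { unfold WW. rewrite cos_plus, sin_plus, cos_2PI, sin_2PI. ring. }
  assert (E3 : uu (t + 2 * PI) = uu t) by (unfold uu; now rewrite E1).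
  split; auto. unfold vv. now rewrite E3, E2.
Qed.

Lemma uv_inv x y t : -e <= x <= e -> uu t = x -> vv t = y -> cc t = xi x /\ WW t = nu x y.
Proof.
  intros Hx Hu Hv. destruct (uu_spec t) as [_ Hxi]. rewrite Hu in Hxi. split; auto.
  assert (Hn := P1_nz x (d_lt _ (e_d _ (le_abs _ _ Hx)))). assert (HE := EE_pos x).
  unfold vv in Hv. rewrite Hu in Hv. unfold nu. rewrite <- Hv. field. split; lra.
Qed.

Lemma minimal s : 0 < s < 2 * PI -> cc s = A -> WW s = B -> False.
Proof.
  intros Hs E1 E2. unfold cc, WW in *.
  assert (Hc : (A ^ 2 + B ^ 2) * cos s = (A ^ 2 + B ^ 2)).
  { transitivity (A * (A * cos s + B * sin s) + B * (- A * sin s + B * cos s)); [ring|].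
    rewrite E1, E2; ring. }
  assert (Hsn : (A ^ 2 + B ^ 2) * sin s = 0).
  { transitivity (B * (A * cos s + B * sin s) - A * (- A * sin s + B * cos s)); [ring|].
    rewrite E1, E2; ring. }
  assert (S0 : sin s = 0) by (apply Rmult_integral in Hsn; destruct Hsn; lra).
  assert (C1 : cos s = 1).
  { apply Rmult_eq_reg_l with (A ^ 2 + B ^ 2); lra. }
  destruct (sin_eq_0_0 s S0) as [k Hk].
  assert (HP := PI_RGT_0).
  assert (K1 : 0 < IZR k) by (subst; nra).
  assert (K2 : IZR k < 2) by (subst; nra).
  apply lt_IZR in K1. replace 2 with (IZR 2) in K2 by reflexivity. apply lt_IZR in K2.
  assert (k = 1%Z) by lia. subst. rewrite Rmult_1_l, cos_PI in C1. lra.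
Qed.

Lemma Y_pos : 0 < Y.
Proof. unfold Y. apply Rdiv_lt_0_compat. lra. apply Rabs_pos_lt, H10. Qed.

Lemma m_le_xi x : Rabs x = e -> m <= xi x ^ 2.
Proof.
  intro H. unfold Rabs in H. destruct Rcase_abs in H.
  - replace x with (- e) by lra. unfold m. eapply Rle_trans; [apply Rmin_l|apply Rmin_r].
  - replace x with e by lra. unfold m. eapply Rle_trans; [apply Rmin_l|apply Rmin_l].
Qed.

Lemma surround : surrounds_origin uu vv.
Proof.
  assert (HY := Y_pos). assert (Hm := m_pos).
  split.
  - intros t E. injection E as Hu Hv.
    destruct (uv_inv 0 0 t) as [E1 E2]; auto. lra.
    assert (T := ccWW t). rewrite E1, E2, xi0 in T. unfold nu in T. rewrite H00 in T.
    assert (T2 : A ^ 2 + B ^ 2 = 0) by (rewrite <- T; ring). lra.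
  - exists (e + Y). intros g1 g2 Hg1 Hg2 H1 H2 Hfar.
    set (cx := fun s => clamp (-e) e (g1 s)).
    set (cy := fun s => clamp (-Y) Y (g2 s)).
    set (Psi := fun s => xi (cx s) * xi (cx s) + ((P0 (cx s) + P1 (cx s) * cy s) * EE (cx s))
                         * ((P0 (cx s) + P1 (cx s) * cy s) * EE (cx s))).
    assert (PsiE : forall s, Psi s = xi (cx s) ^ 2 + nu (cx s) (cy s) ^ 2)
      by (intro s; unfold Psi, nu; ring).
    assert (cxr : forall s, -e <= cx s <= e) by (intro s; apply clamp_range; lra).
    assert (cyr : forall s, -Y <= cy s <= Y) by (intro s; apply clamp_range; lra).
    assert (PsiBig : forall s, e < Rabs (g1 s) \/ Y < Rabs (g2 s) -> m <= Psi s).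
    { intros s [Hs|Hs]; rewrite PsiE.
      - assert (K := clamp_out (-e) e (g1 s) (proj1 He) eq_refl Hs).
        assert (K2 := m_le_xi _ K). assert (0 <= nu (cx s) (cy s) ^ 2) by apply pow2_ge_0. 
        change (clamp (-e) e (g1 s)) with (cx s) in K2. lra.
      - assert (K := clamp_out (-Y) Y (g2 s) HY eq_refl Hs).
        change (clamp (-Y) Y (g2 s)) with (cy s) in K.
        assert (K2 := nu_big (cx s) (cy s) (le_abs _ _ (cxr s)) (Req_le _ _ (eq_sym K))).
        assert (0 <= xi (cx s) ^ 2) by apply pow2_ge_0.
        assert (m <= exp (-1) ^ 2) by (unfold m; apply Rmin_r).
        lra. }
    assert (PsiC : forall s, continuity_pt Psi s).
    { intro s.
      assert (Cx : continuity_pt cx s).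
      { apply (C_comp g1 (clamp (-e) e)). apply Hg1. apply clamp_cont. lra. }
      assert (Cy : continuity_pt cy s).
      { apply (C_comp g2 (clamp (-Y) Y)). apply Hg2. apply clamp_cont. lra. }
      assert (Cxi : continuity_pt (fun s => xi (cx s)) s).
      { apply (C_comp cx xi). exact Cx. apply xi_cont_e, cxr. }
      assert (CE : continuity_pt (fun s => EE (cx s)) s).
      { apply (C_comp cx EE). exact Cx. apply (D_cont _ _ _ (EE_deriv _ (e_d _ (le_abs _ _ (cxr s))))). }
      assert (CP0 : continuity_pt (fun s => P0 (cx s)) s).
      { apply (C_comp cx P0). exact Cx. apply peval_cont. }
      assert (CP1 : continuity_pt (fun s => P1 (cx s)) s).
      { apply (C_comp cx P1). exact Cx. apply peval_cont. }
      assert (NN : continuity_pt (fun s => (P0 (cx s) + P1 (cx s) * cy s) * EE (cx s)) s).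
      { apply C_mult; [apply C_plus; [exact CP0 | apply C_mult; [exact CP1 | exact Cy]] | exact CE]. }
      unfold Psi. apply C_plus; apply C_mult; assumption. }
    assert (Far : e < Rabs (g1 1) \/ Y < Rabs (g2 1)).
    { destruct (Rlt_le_dec e (Rabs (g1 1))); auto. destruct (Rlt_le_dec Y (Rabs (g2 1))); auto.
      exfalso. rewrite <- (pow2_abs (g1 1)), <- (pow2_abs (g2 1)) in Hfar.
      assert (0 <= Rabs (g1 1)) by apply Rabs_pos. assert (0 <= Rabs (g2 1)) by apply Rabs_pos.
      nra. }
    assert (P0v : Psi 0 = 0).
    { rewrite PsiE. unfold cx, cy. rewrite H1, H2, !clamp_id by lra.
      rewrite xi0. unfold nu. rewrite H00. ring. }
    destruct (IVT_interv (fun s => Psi s - (A ^ 2 + B ^ 2)) 0 1) as [z [Hz Hz2]].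
    + intros a Ha. apply C_minus. apply PsiC. apply continuity_pt_const. intros u v; auto.
    + lra.
    + cbv beta. lra.
    + cbv beta. assert (T := PsiBig 1 Far). lra.
    + cbv beta in Hz2.
      assert (In1 : Rabs (g1 z) <= e).
      { destruct (Rle_dec (Rabs (g1 z)) e) as [k|k]; auto. exfalso.
        assert (T := PsiBig z (or_introl (Rnot_le_lt _ _ k))). lra. }
      assert (In2 : Rabs (g2 z) <= Y).
      { destruct (Rle_dec (Rabs (g2 z)) Y) as [k|k]; auto. exfalso.
        assert (T := PsiBig z (or_intror (Rnot_le_lt _ _ k))). lra. }
      apply abs_le in In1. apply abs_le in In2.
      assert (Ex : cx z = g1 z) by (unfold cx; apply clamp_id; lra).
      assert (Ey : cy z = g2 z) by (unfold cy; apply clamp_id; lra).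
      rewrite PsiE, Ex, Ey in Hz2.
      destruct (rot A B (xi (g1 z)) (nu (g1 z) (g2 z))) as [t [Et1 Et2]]; try lra.
      exists z, t. split; [lra|].
      assert (Ut : uu t = g1 z).
      { unfold uu. change (A * cos t + B * sin t) with (cc t) in Et1. rewrite Et1. apply X_xi. lra. }
      split; auto.
      unfold vv. rewrite Ut. change (- A * sin t + B * cos t) with (WW t) in Et2. rewrite Et2.
      assert (Hn := P1_nz (g1 z) (d_lt _ (e_d _ (le_abs _ _ In1)))). assert (HE := EE_pos (g1 z)).
      unfold nu. field. split; lra.
Qed.
End Orbit.

Lemma sq_pos z : z <> 0 -> 0 < z ^ 2.
Proof. intro h. destruct (Rtotal_order z 0) as [h'|[h'|h']]; [nra|contradiction|nra]. Qed.

Lemma orbit_ok x0 y0 : Rabs x0 <= e -> 0 < x0 ^ 2 + y0 ^ 2 -> xi x0 ^ 2 + nu x0 y0 ^ 2 < m ->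
  closed_orbit_period (fun x y => P0 x + P1 x * y)
    (fun x y => Q0 x + Q1 x * y + Q2 x * y ^ 2) x0 y0 (2 * PI).
Proof.
  intros Hx0 Hpos Hm. apply abs_le in Hx0.
  set (A := xi x0). set (B := nu x0 y0).
  assert (Hn := P1_nz x0 (d_lt _ (e_d _ (le_abs _ _ Hx0)))). assert (HE := EE_pos x0).
  assert (HAB : 0 < A ^ 2 + B ^ 2 < m).
  { split; [|exact Hm].
    destruct (Req_dec A 0) as [HA|HA]; [destruct (Req_dec B 0) as [HB|HB]|].
    - exfalso. assert (X0 : x0 = 0).
      { apply xi_inj; try lra. rewrite xi0. exact HA. }
      subst x0. unfold B, nu in HB. rewrite H00 in HB.
      assert (HE0 := EE_pos 0).
      assert (y0 = 0).
      { apply Rmult_integral in HB. destruct HB as [HB|HB]; [|lra].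
        rewrite Rplus_0_l in HB.
        destruct (Rmult_integral _ _ HB); [contradiction|auto]. }
      subst. lra.
    - assert (0 < B ^ 2) by (apply sq_pos; auto).
      assert (0 <= A ^ 2) by apply pow2_ge_0. lra.
    - assert (0 < A ^ 2) by (apply sq_pos; auto).
      assert (0 <= B ^ 2) by apply pow2_ge_0. lra. }
  assert (U0 : uu A B 0 = x0).
  { unfold uu, cc. rewrite cos_0, sin_0. replace (A * 1 + B * 0) with (xi x0) by (unfold A; ring).
    apply X_xi; lra. }
  exists (uu A B), (vv A B). split; [apply sol; auto|]. split; [auto|]. split.
  { unfold vv. rewrite U0. unfold WW. rewrite cos_0, sin_0. unfold B, nu. field. split; lra. }
  split; [apply Rmult_lt_0_compat; [lra|apply PI_RGT_0]|].
  split; [intro t; apply period; auto|].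
  split; [|apply surround; auto].
  intros s Hs E. injection E as E1 E2.
  destruct (uv_inv A B HAB x0 y0 s Hx0 E1 E2) as [F1 F2].
  apply (minimal A B HAB s Hs); auto.
Qed.

Lemma r_exists : exists r, 0 < r /\ forall x0 y0, x0 ^ 2 + y0 ^ 2 < r ^ 2 ->
  Rabs x0 <= e /\ xi x0 ^ 2 + nu x0 y0 ^ 2 < m.
Proof.
  assert (Hm := m_pos). set (eps := Rmin 1 (m / 4)).
  assert (E1 := Rmin_l 1 (m / 4)). assert (E2 := Rmin_r 1 (m / 4)).
  assert (Heps : 0 < eps) by (apply Rmin_glb_lt; lra). fold eps in E1, E2.
  assert (He1 := exp_pos 1).
  assert (Hp := Rabs_pos_lt _ H10).
  assert (Cxi : continuity_pt xi 0) by (apply xi_cont; rewrite Rabs_R0; apply d_pos).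
  destruct (cont_eps xi 0 Cxi eps Heps) as [r1 [Hr1 K1]].
  destruct (cont_eps P0 0 (peval_cont p0 0) (eps / (2 * exp 1))) as [r2 [Hr2 K2]].
  { apply Rdiv_lt_0_compat; lra. }
  set (r3 := eps / (4 * Rabs (P1 0) * exp 1)).
  assert (Hr3 : 0 < r3) by (unfold r3; apply Rdiv_lt_0_compat; [lra|]; apply Rmult_lt_0_compat; lra).
  set (r := Rmin (Rmin e r1) (Rmin r2 r3)).
  assert (R1 := Rmin_l (Rmin e r1) (Rmin r2 r3)). assert (R2 := Rmin_r (Rmin e r1) (Rmin r2 r3)).
  assert (R3 := Rmin_l e r1). assert (R4 := Rmin_r e r1).
  assert (R5 := Rmin_l r2 r3). assert (R6 := Rmin_r r2 r3). fold r in R1, R2.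
  assert (Hr : 0 < r).
  { apply Rmin_glb_lt; apply Rmin_glb_lt; lra. }
  exists r. split; auto. intros x0 y0 H.
  assert (Ax : Rabs x0 < r).
  { rewrite <- (pow2_abs x0) in H. assert (0 <= Rabs x0) by apply Rabs_pos. nra. }
  assert (Ay : Rabs y0 < r).
  { rewrite <- (pow2_abs y0) in H. assert (0 <= Rabs y0) by apply Rabs_pos. nra. }
  assert (Hx0e : Rabs x0 <= e) by lra. split; auto.
  assert (X1 : Rabs (xi x0) < eps).
  { specialize (K1 x0 ltac:(rewrite Rminus_0_r; lra)). rewrite xi0, !Rminus_0_r in K1. exact K1. }
  assert (X2 : Rabs (P0 x0) < eps / (2 * exp 1)).
  { specialize (K2 x0 ltac:(rewrite Rminus_0_r; lra)). rewrite H00, !Rminus_0_r in K2. exact K2. }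
  assert (X3 : Rabs (P1 x0) < 2 * Rabs (P1 0)) by (apply P1_small, d_lt, e_d; lra).
  assert (X4 := EE_up x0 Hx0e). assert (X5 := EE_pos x0).
  assert (X6 : Rabs (P1 x0 * y0) <= 2 * Rabs (P1 0) * r3).
  { rewrite Rabs_mult. apply Rmult_le_compat; try apply Rabs_pos; lra. }
  assert (X7 : Rabs (P0 x0 + P1 x0 * y0) < eps / (2 * exp 1) + 2 * Rabs (P1 0) * r3).
  { eapply Rle_lt_trans. apply Rabs_triang. lra. }
  assert (X8 : (eps / (2 * exp 1) + 2 * Rabs (P1 0) * r3) * exp 1 = eps).
  { unfold r3. field. lra. }
  assert (X9 : Rabs (nu x0 y0) < eps).
  { unfold nu. rewrite Rabs_mult, (Rabs_right (EE x0)) by lra. rewrite <- X8.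
    assert (0 <= Rabs (P0 x0 + P1 x0 * y0)) by apply Rabs_pos. nra. }
  rewrite <- (pow2_abs (xi x0)), <- (pow2_abs (nu x0 y0)).
  assert (0 <= Rabs (xi x0)) by apply Rabs_pos. assert (0 <= Rabs (nu x0 y0)) by apply Rabs_pos.
  nra.
Qed.

Lemma iso_gen : isochronous_center (fun x y => P0 x + P1 x * y)
    (fun x y => Q0 x + Q1 x * y + Q2 x * y ^ 2).
Proof.
  destruct r_exists as [r [Hr K]]. exists r, (2 * PI). split; auto.
  intros x0 y0 [H1 H2]. destruct (K x0 y0 H2). apply orbit_ok; auto.
Qed.

Lemma zu_gen : zero_urabe (fun x y => P0 x + P1 x * y)
    (fun x y => Q0 x + Q1 x * y + Q2 x * y ^ 2).
Proof.
  exists p0, p1, q0, q1, q2. split; [reflexivity|]. split; [reflexivity|].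
  split; auto. split; auto. split; auto. split; auto.
  exists d. split. apply d_pos. apply urabe_ok.
Qed.
End Gen.

Lemma main_gen (p0 p1 q0 q1 q2 : list R) (P Q : R -> R -> R) :
  (forall x y, P x y = peval p0 x + peval p1 x * y) ->
  (forall x y, Q x y = peval q0 x + peval q1 x * y + peval q2 x * y ^ 2) ->
  peval p0 0 = 0 -> peval q0 0 = 0 -> peval p1 0 <> 0 ->
  (forall x, peval p1 x <> 0 ->
    - peval (pderiv p1) x * peval p0 x / peval p1 x + peval q1 x + peval (pderiv p0) x
    - 2 * peval q2 x * peval p0 x / peval p1 x = 0) ->
  (forall x,
  (- peval (pderiv q2) x * peval p0 x ^ 2 - 2 * peval q2 x * peval p0 x * peval (pderiv p0) x
   + peval (pderiv q1) x * peval p0 x * peval p1 x + peval q1 x * peval (pderiv p0) x * peval p1 x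
   + peval q1 x * peval p0 x * peval (pderiv p1) x - 2 * peval p1 x * peval (pderiv p1) x * peval q0 x
   - peval p1 x ^ 2 * peval (pderiv q0) x) * peval p1 x
  - (peval q2 x + 2 * peval (pderiv p1) x)
    * (- peval q2 x * peval p0 x ^ 2 + peval q1 x * peval p0 x * peval p1 x - peval p1 x ^ 2 * peval q0 x)
  = peval p1 x ^ 2) ->
  isochronous_zero_urabe P Q.
Proof.
  intros HP HQ H00 Hq00 H10 HC HK.
  assert (EP : P = fun x y => peval p0 x + peval p1 x * y).
  { extensionality x; extensionality y; apply HP. }
  assert (EQ : Q = fun x y => peval q0 x + peval q1 x * y + peval q2 x * y ^ 2).
  { extensionality x; extensionality y; apply HQ. }
  subst P Q.
  assert (Hp := Rabs_pos_lt _ H10).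
  destruct (cont_eps (peval p1) 0 (peval_cont p1 0) (Rabs (peval p1 0) / 2)) as [d0 [Hd0 Kd]].
  { lra. }
  assert (Hd0b : forall x, Rabs x < d0 -> Rabs (peval p1 x - peval p1 0) < Rabs (peval p1 0) / 2).
  { intros x Hx. apply Kd. rewrite Rminus_0_r; auto. }
  destruct (e_exists p0 p1 q0 q1 q2 H00 H10 d0 Hd0 Hd0b) as [e [He [HeP0 HeF]]].
  split.
  - exact (iso_gen p0 p1 q0 q1 q2 H00 Hq00 H10 HC HK d0 Hd0 Hd0b e He HeP0 HeF).
  - exact (zu_gen p0 p1 q0 q1 q2 H00 Hq00 H10 HC HK d0 Hd0 Hd0b).
Qed.

Lemma sys1 (a : R) :
    isochronous_zero_urabe
      (fun x y => - y + x * y - 3 * a / 4 * x ^ 2 + a * x ^ 3 - a / 4 * x ^ 4)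
      (fun x y => x + 3 * y ^ 2 + 3 * a / 2 * x * y - x ^ 2 + 9 * a / 4 * x ^ 2 * y
                  + (1 / 3 + 9 / 8 * a ^ 2) * x ^ 3 - 3 * a / 4 * x ^ 3 * y
                  - 3 * a ^ 2 / 8 * x ^ 4).
Proof.
  apply (main_gen [0; 0; -3*a/4; a; -a/4] [-1; 1] [0; 1; -1; 1/3 + 9/8*a^2; -3*a^2/8]
                  [0; 3*a/2; 9*a/4; -3*a/4] [3]).
  - intros; simpl; field.
  - intros; simpl; field.
  - simpl; ring.
  - simpl; ring.
  - simpl; lra.
  - intros x Hx; simpl in *. field. intro E; apply Hx; ring_simplify; lra.
  - intros x; simpl. field.
Qed.

Lemma sys2 (sg : R) : sg = 1 \/ sg = -1 ->
    isochronous_zero_urabe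
      (fun x y => - y + x * y + sg * (sqrt 2 / 2) * x ^ 2
                  - sg * (2 * sqrt 2 / 3) * x ^ 3 + sg * (sqrt 2 / 6) * x ^ 4)
      (fun x y => x + 6 * y ^ 2 - sg * sqrt 2 * x * y - 5 / 2 * x ^ 2
                  - sg * (9 * sqrt 2 / 2) * x ^ 2 * y + 13 / 3 * x ^ 3
                  + sg * (3 * sqrt 2 / 2) * x ^ 3 * y - 4 / 3 * x ^ 4).
Proof.
  intro Hsg. assert (H2 : sqrt 2 ^ 2 = 2) by (apply pow2_sqrt; lra).
  set (s := sqrt 2) in *.
  apply (main_gen [0; 0; sg*(s/2); -sg*(2*s/3); sg*(s/6)] [-1; 1] [0; 1; -5/2; 13/3; -4/3]
                  [0; -sg*s; -sg*(9*s/2); sg*(3*s/2)] [6]).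
  - intros; simpl; field.
  - intros; simpl; field.
  - simpl; ring.
  - simpl; ring.
  - simpl; lra.
  - intros x Hx; simpl in *. field. intro E; apply Hx; ring_simplify; lra.
  - intros x; simpl. destruct Hsg as [-> | ->]; field [H2].
Qed.

Lemma sys3 (sg : R) : sg = 1 \/ sg = -1 ->
    isochronous_zero_urabe
      (fun x y => - y - sg * (2 * sqrt 2) * x * y + x ^ 2 + sg * (2 * sqrt 2) * x ^ 3)
      (fun x y => x - sg * (6 * sqrt 2) * y ^ 2 - 2 * x * y
                  + sg * (2 * sqrt 2) * x ^ 2 + sg * (8 * sqrt 2) * x ^ 2 * y
                  + 14 / 3 * x ^ 3 - sg * (2 * sqrt 2) * x ^ 4).
Proof.
  intro Hsg. assert (H2 : sqrt 2 ^ 2 = 2) by (apply pow2_sqrt; lra).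
  set (s := sqrt 2) in *.
  apply (main_gen [0; 0; 1; sg*(2*s)] [-1; -sg*(2*s)] [0; 1; sg*(2*s); 14/3; -sg*(2*s)]
                  [0; -2; sg*(8*s)] [-sg*(6*s)]).
  - intros; simpl; field.
  - intros; simpl; field.
  - simpl; ring.
  - simpl; ring.
  - simpl; lra.
  - intros x Hx; simpl in *. destruct Hsg as [-> | ->]; field [H2].
    all: intro E; apply Hx; ring_simplify; ring_simplify in E; lra.
  - intros x; simpl. destruct Hsg as [-> | ->]; field [H2].
Qed.

(* sg = 1 : upper signs, sg = -1 : lower signs *)
Theorem theorem4p2 :
  (forall a : R,
    isochronous_zero_urabe
      (fun x y => - y + x * y - 3 * a / 4 * x ^ 2 + a * x ^ 3 - a / 4 * x ^ 4)
      (fun x y => x + 3 * y ^ 2 + 3 * a / 2 * x * y - x ^ 2 + 9 * a / 4 * x ^ 2 * y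
                  + (1 / 3 + 9 / 8 * a ^ 2) * x ^ 3 - 3 * a / 4 * x ^ 3 * y
                  - 3 * a ^ 2 / 8 * x ^ 4)) /\
  (forall sg : R, sg = 1 \/ sg = -1 ->
    isochronous_zero_urabe
      (fun x y => - y + x * y + sg * (sqrt 2 / 2) * x ^ 2
                  - sg * (2 * sqrt 2 / 3) * x ^ 3 + sg * (sqrt 2 / 6) * x ^ 4)
      (fun x y => x + 6 * y ^ 2 - sg * sqrt 2 * x * y - 5 / 2 * x ^ 2
                  - sg * (9 * sqrt 2 / 2) * x ^ 2 * y + 13 / 3 * x ^ 3
                  + sg * (3 * sqrt 2 / 2) * x ^ 3 * y - 4 / 3 * x ^ 4)) /\
  (forall sg : R, sg = 1 \/ sg = -1 ->
    isochronous_zero_urabe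
      (fun x y => - y - sg * (2 * sqrt 2) * x * y + x ^ 2 + sg * (2 * sqrt 2) * x ^ 3)
      (fun x y => x - sg * (6 * sqrt 2) * y ^ 2 - 2 * x * y
                  + sg * (2 * sqrt 2) * x ^ 2 + sg * (8 * sqrt 2) * x ^ 2 * y
                  + 14 / 3 * x ^ 3 - sg * (2 * sqrt 2) * x ^ 4)).
Proof.
  split; [exact sys1|]. split; [exact sys2|exact sys3].
Qed.
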